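(* Let $G$ be a finite group, $p$ a prime, and let $S_1\times\cdots\times S_t\trianglelefteq G$, where the $S_i$ are subgroups permuted by $G$ under conjugation. Let $S=S_1$. Assume there exists $\alpha\in\mathrm{Irr}(N_G(S)/C_G(S))$ lying in the principal $p$-block such that $S$ is not contained in $\ker\alpha$ (where $\alpha$ is viewed as a character of $N_G(S)$ by inflation). Then $\alpha^G\in\mathrm{Irr}(B_0(G))$.
   Context: $B_0(G)$ is the principal $p$-block of $G$; $\alpha^G$ denotes the induced character from $N_G(S)$ to $G$. *)

(* Defs.v *)
From HB Require Import structures.
From mathcomp Require Import all_boot all_order all_algebra all_fingroup all_solvable all_field all_character.
Set Implicit Arguments. Unset Strict Implicit. Unset Printing Implicit Defensive.
Import GRing.Theory Num.Theory.
Local Open Scope ring_scope.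

(* M is a maximal ideal of the ring Aint of algebraic integers (in algC)
   containing the prime p. *)
Definition max_ideal_over (p : nat) (M : pred algC) : Prop :=
  {subset M <= Aint} /\
      0 \in M /\
      (forall x y, x \in M -> y \in M -> x - y \in M) /\
      (forall a x, a \in Aint -> x \in M -> a * x \in M) /\
      p%:R \in M /\
      1 \notin M /\
      (forall a, a \in Aint -> a \notin M ->
         exists2 b, b \in Aint & a * b - 1 \in M).

(* Central character value omega_chi(K^) on the class sum of K = x^G. *)
Definition omega (gT : finGroupType) (G : {group gT}) (chi : 'CF(G)) (x : gT)
  : algC := #|(x ^: G)%g|%:R * chi x / chi 1%g.

(* chi \in Irr(B_0(G)) for the p-blocks defined w.r.t. the maximal ideal M:
   chi irreducible and omega_chi = omega_{1_G} modulo M on all class sums. *)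
Definition in_principal_block (gT : finGroupType) (M : pred algC)
  (G : {group gT}) (chi : 'CF(G)) : Prop :=
  chi \in irr G /\
  (forall x, x \in G -> omega chi x - #|(x ^: G)%g|%:R \in M).

(* Main.v *)
Require Import Defs.
From HB Require Import structures.
From mathcomp Require Import all_boot all_order all_algebra all_fingroup all_solvable all_field all_character.
From mathcomp Require Import ring.
Import GRing.Theory Num.Theory.
Local Open Scope ring_scope.

Section MFacts.
Variables (p : nat) (M : pred algC).
Hypothesis hM : max_ideal_over p M.

Lemma M0 : 0 \in M. Proof. by case: hM => _ [? _]. Qed.
Lemma MB x y : x \in M -> y \in M -> x - y \in M.
Proof. by case: hM => _ [_ [h _]]; apply: h. Qed.
Lemma MN y : y \in M -> - y \in M.
Proof. by move=> My; rewrite -sub0r MB ?M0. Qed.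
Lemma MD x y : x \in M -> y \in M -> x + y \in M.
Proof. by move=> Mx My; rewrite -(opprK y) MB ?MN. Qed.
Lemma MmulA a x : a \in Aint -> x \in M -> a * x \in M.
Proof. by case: hM => _ [_ [_ [h _]]]; apply: h. Qed.
Lemma Mnat n x : x \in M -> n%:R * x \in M.
Proof. by move=> Mx; apply: MmulA Mx; apply: rpred_nat. Qed.
Lemma Mp : p%:R \in M. Proof. by case: hM => _ [_ [_ [_ [h _]]]]. Qed.
Lemma M1 : 1 \notin M. Proof. by case: hM => _ [_ [_ [_ [_ [h _]]]]]. Qed.
Lemma Mpk k : (p * k)%:R \in M. Proof. by rewrite natrM mulrC Mnat ?Mp. Qed.
Lemma Msum I r (P : pred I) (F : I -> algC) :
  (forall i, P i -> F i \in M) -> \sum_(i <- r | P i) F i \in M.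
Proof. by move=> h; apply: (big_ind (fun x => x \in M)) => //; [exact: M0 | exact: MD]. Qed.

Lemma M_coprime n : prime p -> coprime p n -> n%:R \notin M.
Proof.
move=> pr_p cop; apply/negP => Mn.
have [a _] := Bezoutl n (prime_gt0 pr_p).
rewrite (eqP cop) => /dvdnP[k hk].
have e : 1 = (k * p)%:R - a%:R * n%:R :> algC.
  by rewrite -hk natrD natrM addrK.
by move: M1; rewrite e MB ?Mnat // mulnC Mpk.
Qed.

Lemma M_class_sum (gT : finGroupType) (X : {group gT}) (f : gT -> algC) (w : gT -> nat) :
  {in X &, forall g h, f (g ^ h)%g = f g} -> {in X &, forall g h, w (g ^ h)%g = w g} ->
  {in X, forall y, #|(y ^: X)%g|%:R * f y \in M} ->
  \sum_(y in X) (w y)%:R * f y \in M.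
Proof.
move=> fJ wJ hf; rewrite sum_by_classes; last by move=> g h Xg Xh; rewrite fJ ?wJ.
apply: Msum => K /repr_classesP[XrK defK]; rewrite mulrCA; apply: Mnat.
by rewrite {1}defK; apply: hf.
Qed.

End MFacts.
Arguments M0 {p M} hM.
Arguments MB {p M} hM [x y].
Arguments MN {p M} hM [y].
Arguments MD {p M} hM [x y].
Arguments Mnat {p M} hM n [x].
Arguments Mpk {p M} hM k.
Arguments M_coprime {p M} hM [n].
Arguments M_class_sum {p M} hM [gT] X f w.

Lemma sum_conj_fiber (gT : finGroupType) (G : {group gT}) x (F : gT -> algC) : x \in G ->
 \sum_(y in G) F (x ^ y)%g = #|('C_G[x])%g|%:R * \sum_(z in (x ^: G)%g) F z.
Proof.
move=> Gx.
rewrite (partition_big (fun y => x ^ y)%g (mem (x ^: G)%g)) /=; last first.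
  by move=> y Gy; exact: memJ_class.
rewrite mulr_sumr; apply: eq_bigr => z /imsetP[g Gg ->].
transitivity (\sum_(y in ('C_G[x] :* g)%g) F (x ^ g)%g); last first.
  by rewrite sumr_const card_rcoset mulr_natl.
apply: eq_big => [y|y]; last by move=> /andP[_ /eqP ->].
rewrite mem_rcoset !inE groupMr ?groupV //; apply: andb_id2l => Gy.
rewrite conjg_set1 sub1set inE conjgM.
apply/eqP/eqP => [-> | e]; first by rewrite conjgK.
by rewrite -{2}e conjgKV.
Qed.

Lemma Ind_irr_sub (gT : finGroupType) (G H N : {group gT}) (t : Iirr N) (i : Iirr H) :
  (N <| G)%g -> (N \subset H)%g -> (H \subset G)%g -> ('I_G['chi_t] \subset H)%g ->
  t \in irr_constt ('Res[N] 'chi_i) -> 'Ind[G] 'chi_i \in irr G.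
Proof.
move=> nsNG sNH sHG sIH Nt.
have nsNH : (N <| H)%g := normalS sNH sHG nsNG.
have eqT : ('I_H['chi_t])%G = ('I_G['chi_t])%G.
  apply: val_inj => /=; apply/eqP; rewrite eqEsubset.
  by rewrite setSI //= subsetI sIH subsetIr.
have [irrA _ imB _ _] := constt_Inertia_bijection t nsNH.
have : i \in Ind_Iirr H @: irr_constt ('Ind['I_H['chi_t]] 'chi_t) by rewrite imB constt_Ind_Res.
case/imsetP => s As ->.
rewrite /Ind_Iirr cfIirrE ?irrA // cfIndInd ?subsetIl //.
have [irrG _ _ _ _] := constt_Inertia_bijection t nsNG.
pose P (T : {group gT}) := forall s : Iirr T,
  s \in irr_constt ('Ind[T] 'chi_t) -> 'Ind[G] 'chi_s \in irr G.
have PG : P ('I_G['chi_t])%G by move=> s'; exact: irrG.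
have PH : P ('I_H['chi_t])%G by rewrite eqT.
exact: PH s As.
Qed.


Section Core.
Variables (gT : finGroupType) (G N S R : {group gT}) (p : nat) (M : pred algC).
Variable (beta : Iirr ('N_G(S) / 'C_G(S))).
Hypotheses (pr_p : prime p) (hM : max_ideal_over p M) (nsNG : (N <| G)%g).
Hypothesis defN : (S \x R)%g = N.
Hypothesis hperm : forall g, g \in G -> (S :^ g)%g = S \/ (S :^ g \subset R)%g.
Hypothesis blk : in_principal_block M ('chi_beta).
Hypothesis notker : ~~ (S \subset cfker ('chi_beta %% 'C_G(S))%CF).

Local Notation H := ('N_G(S))%G.
Local Notation C := ('C_G(S))%G.
Local Notation Q := (('N_G(S) / 'C_G(S)))%G.
Local Notation alpha := ('chi_beta %% 'C_G(S))%CF.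

Let nsCH : ('C_G(S) <| 'N_G(S))%g := subcent_normal G S.
Let sNG : (N \subset G)%g := normal_sub nsNG.
Let dP := dprodP defN.
Let sSN : (S \subset N)%g.
Proof. by have [_ <- _ _] := dP; rewrite mulG_subl. Qed.
Let sRN : (R \subset N)%g.
Proof. by have [_ <- _ _] := dP; rewrite mulG_subr. Qed.
Let cSR : (R \subset 'C(S))%g.
Proof. by have [_ _ -> _] := dP. Qed.
Let tiSR : (S :&: R = 1)%g.
Proof. by have [_ _ _ ->] := dP. Qed.
Let sSG : (S \subset G)%g := subset_trans sSN sNG.
Let sRG : (R \subset G)%g := subset_trans sRN sNG.
Let sRC : (R \subset 'C_G(S))%g.
Proof. by rewrite subsetI sRG cSR. Qed.
Let sNH : (N \subset 'N_G(S))%g.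
Proof.
have [_ <- _ _] := dP; rewrite mul_subG // subsetI ?sSG ?normG ?sRG //.
exact: subset_trans cSR (cent_sub S).
Qed.
Let sHG : ('N_G(S) \subset G)%g := subsetIl _ _.
Let sSH : (S \subset 'N_G(S))%g := subset_trans sSN sNH.
Let nsSH : (S <| 'N_G(S))%g.
Proof. by rewrite normal_subnorm. Qed.

Lemma core_irr : 'Ind[G] alpha \in irr G.
Proof.
have airr : alpha \in irr 'N_G(S) by rewrite cfMod_irr ?mem_irr.
have Na := irrWchar airr.
have /irrP[i defa] := airr.
have nS : ~~ (S \subset cfker ('Res[N] alpha)) by rewrite cfker_Res // subsetI sSN.
have [th Cth nSth] : exists2 th, th \in irr_constt ('Res[N] alpha) & ~~ (S \subset cfker 'chi[N]_th).
  apply/exists_inP; rewrite -negb_forall_in; apply: contra nS => /forall_inP h.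
  rewrite cfkerE ?cfRes_char // subsetI sSN; apply/bigcapsP => j /h //.
have sRth : (R \subset cfker 'chi_th)%g.
  apply: subset_trans (cfker_constt (cfRes_char _ Na) Cth).
  rewrite cfker_Res // subsetI sRN; exact: subset_trans sRC (cfker_mod _ nsCH).
rewrite defa; apply: (@Ind_irr_sub _ G _ N th _ nsNG sNH sHG); last by rewrite -defa.
apply/subsetP => g /setIP[Gg]; rewrite inE => /andP[nNg /eqP thg].
case: (hperm _ Gg) => [eS | sSgR]; first by rewrite in_setI Gg; apply/normP.
case/negP: nSth; rewrite -(conjSg _ _ g) -cfker_conjg // thg.
exact: subset_trans sSgR sRth.
Qed.

Lemma core_pS : (p %| #|S|)%N.
Proof.
apply: contraT => npS.
have nCS : (S \subset 'N('C_G(S)))%g := subset_trans sSH (normal_norm nsCH).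
have nsSbQ : (S / 'C_G(S) <| 'N_G(S) / 'C_G(S))%g := quotient_normal _ nsSH.
have nkerb : ~~ (S / 'C_G(S) \subset cfker 'chi_beta)%g.
  by rewrite -sub_cfker_mod.
have d0 : '['Res[S / 'C_G(S)] 'chi_beta, 'chi_0] = 0.
  apply/eqP; rewrite -[_ == 0]negbK -irr_consttE; apply: contra nkerb.
  exact: constt0_Res_cfker nsSbQ.
have sum0 : \sum_(q in (S / 'C_G(S))%g) 'chi_beta q = 0.
  move: d0; rewrite irr0 cfdotE => /eqP; rewrite mulf_eq0 invr_eq0 pnatr_eq0.
  rewrite -[(_ == 0)%N]negbK -lt0n cardG_gt0 /= => /eqP e; rewrite -[RHS]e; apply: eq_bigr => q Sq.
  by rewrite cfResE ?normal_sub // cfun1E Sq conjC1 mulr1.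
pose g (q : coset_of 'C_G(S)) := 'chi_beta q / 'chi_beta 1%g - 1.
have [_ hb] := blk.
have hsum := M_class_sum hM ('N_G(S) / 'C_G(S))%G g
   (fun q => nat_of_bool (q \in (S / 'C_G(S))%g)).
have : \sum_(q in ('N_G(S) / 'C_G(S))%g) (nat_of_bool (q \in (S / 'C_G(S))%g))%:R * g q \in M.
  apply: hsum.
  - by move=> q r Qq Qr; rewrite /g cfunJ.
  - by move=> q r Qq Qr; rewrite /= memJ_norm // (subsetP (normal_norm nsSbQ)).
  - by move=> q Qq; have := hb q Qq; rewrite /omega /g mulrBr mulr1 mulrA.
rewrite (big_setID (S / 'C_G(S))%g) /= (setIidPr (normal_sub nsSbQ)).
rewrite [X in _ + X]big1 ?addr0; last first.
  by move=> q /setDP[_ nSq]; rewrite (negPf nSq) mul0r.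
rewrite (eq_bigr g) => [|q Sq]; last by rewrite Sq mul1r.
rewrite /g sumrB -mulr_suml sum0 mul0r sumr_const sub0r => /(MN hM); rewrite opprK.
have cop : coprime p #|(S / 'C_G(S))%g|.
  by rewrite prime_coprime //; apply: contra npS => h; exact: dvdn_trans h (dvdn_quotient S _).
by move=> hX; move: (M_coprime hM pr_p cop); rewrite hX.
Qed.

Lemma core_pout x : x \in G -> (p %| #|(x ^: G :\: 'N_G(S))%g|)%N.
Proof.
move=> Gx.
have [g Sg og] := Cauchy pr_p core_pS.
have pP : (p.-group <[g]>)%g by rewrite /pgroup -/(#[g])%g og pnat_id.
have Hg : g \in ('N_G(S))%g := subsetP sSH g Sg.
have Gg : g \in G := subsetP sSG g Sg.
have act : [acts <[g]>%g, on (x ^: G :\: 'N_G(S))%g | 'J].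
  rewrite astabsJ normsD // cycle_subG.
    exact: (subsetP (class_norm x G)).
  exact: (subsetP (normG _)).
have := pgroup_fix_mod pP act.
have -> : ('Fix_((x ^: G :\: 'N_G(S)) | 'J)(<[g]>))%g = set0.
  apply/setP => z; rewrite in_set0; apply/negP; rewrite inE.
  case/andP => /setDP[xGz nHz] /afixP fz.
  have zgz : (z ^ g)%g = z := fz g (cycle_id g).
  have Gz : z \in G by move: xGz => /imsetP[y Gy ->]; rewrite groupJ.
  have czg : (z * g = g * z)%g by rewrite -{2}zgz conjgE mulKVg.
  have gz : (g ^ z)%g = g by rewrite conjgE -czg mulKg.
  case: (hperm _ Gz) => [eSz | sSzR].
    by case/negP: nHz; rewrite in_setI Gz; apply/normP.
  have gR : g \in R by apply: (subsetP sSzR); rewrite -gz memJ_conjg.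
  have : g \in (S :&: R)%g by rewrite inE Sg gR.
  rewrite tiSR inE => /eqP g1.
  by move: og (prime_gt1 pr_p); rewrite g1 order1 => <-.
by rewrite cards0 mod0n => e; rewrite /dvdn e.
Qed.

Lemma core_sum x : x \in G ->
  \sum_(z in (x ^: G :&: 'N_G(S))%g) (alpha z / alpha 1%g - 1) \in M.
Proof.
move=> Gx.
pose g (q : coset_of 'C_G(S)) := 'chi_beta q / 'chi_beta 1%g - 1.
pose w (q : coset_of 'C_G(S)) :=
  #|[set z in (x ^: G :&: 'N_G(S))%g | coset 'C_G(S) z == q]|.
have -> : \sum_(z in (x ^: G :&: 'N_G(S))%g) (alpha z / alpha 1%g - 1)
    = \sum_(q in ('N_G(S) / 'C_G(S))%g) (w q)%:R * g q.
  rewrite (partition_big (coset 'C_G(S)) (mem ('N_G(S) / 'C_G(S))%g)) /=; last first.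
    by move=> z /setIP[_ Hz]; exact: mem_quotient.
  apply: eq_bigr => q Qq; rewrite /w mulr_natl -sumr_const.
  apply: eq_big => [z|z]; first by rewrite inE.
  by move=> /andP[/setIP[_ Hz] /eqP <-]; rewrite /g cfModE // cfMod1.
have nCH := normal_norm nsCH.
have wle : {in ('N_G(S) / 'C_G(S))%g &, forall q r, (w q <= w (q ^ r)%g)%N}.
  move=> q r Qq /morphimP[h Nh Hh ->].
  rewrite /w -(cardJg _ h); apply: subset_leq_card; apply/subsetP => _ /imsetP[z zin ->].
  rewrite inE in zin; case/andP: zin => /setIP[xGz Hz] /eqP <-.
  have Gh : h \in G := subsetP sHG h Hh.
  rewrite inE in_setI memJ_norm ?(subsetP (class_norm x G)) // xGz groupJ //=.
  by rewrite morphJ // (subsetP nCH).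
have [_ hb] := blk.
apply: (M_class_sum hM ('N_G(S) / 'C_G(S))%G g w).
- by move=> q r Qq Qr; rewrite /g cfunJ.
- move=> q r Qq Qr; apply/eqP; rewrite eqn_leq wle //=.
  by have := wle (q ^ r)%g r^-1%g; rewrite conjgK andbT; apply; rewrite ?groupJ ?groupV.
- by move=> q Qq; have := hb q Qq; rewrite /omega /g mulrBr mulr1 mulrA.
Qed.

Lemma core_block x : x \in G -> omega ('Ind[G] alpha) x - #|(x ^: G)%g|%:R \in M.
Proof.
move=> Gx.
have a1 : alpha 1%g != 0 by rewrite cfMod1 irr1_neq0.
have eom : omega ('Ind[G] alpha) x = \sum_(z in (x ^: G)%g) alpha z / alpha 1%g.
  rewrite /omega cfIndE // sum_conj_fiber // cfInd1 // -index_cent1 -mulr_suml.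
  have hc : #|('C_G[x])%g|%:R != 0 :> algC by rewrite pnatr_eq0 -lt0n cardG_gt0.
  have hH : #|('N_G(S))%g|%:R != 0 :> algC by rewrite pnatr_eq0 -lt0n cardG_gt0.
  have hGH : #|G : 'N_G(S)|%g%:R != 0 :> algC by rewrite pnatr_eq0 -lt0n indexg_gt0.
  have e : #|G : 'C_G[x]|%g%:R = #|G : 'N_G(S)|%g%:R * #|('N_G(S))%g|%:R / #|('C_G[x])%g|%:R :> algC.
    apply: (canRL (mulfK hc)); rewrite -!natrM mulnC Lagrange ?subsetIl //.
    by rewrite mulnC Lagrange.
  rewrite e; field.
  by rewrite hc hH hGH a1.
rewrite eom.
have -> : \sum_(z in (x ^: G)%g) alpha z / alpha 1%g - #|(x ^: G)%g|%:R
    = \sum_(z in (x ^: G)%g) (alpha z / alpha 1%g - 1) by rewrite sumrB sumr_const.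
rewrite (big_setID ('N_G(S))%g) /=.
apply: (MD hM (core_sum _ Gx)).
rewrite (eq_bigr (fun _ => -1)) => [|z /setDP[_ nHz]]; last by rewrite cfun0 // mul0r sub0r.
rewrite sumr_const mulNrn; apply: (MN hM).
by have /dvdnP[k ->] := core_pout _ Gx; rewrite mulnC (Mpk hM).
Qed.

End Core.

Theorem lemma2p2 (gT : finGroupType) (G : {group gT}) (p : nat)
  (M : pred algC) (t : nat) (Si : 'I_t.+1 -> {group gT})
  (N : {group gT}) (beta : Iirr ('N_G(Si ord0) / 'C_G(Si ord0))) :
  prime p ->
  max_ideal_over p M ->
  (\big[dprod/1%g]_(i < t.+1) Si i)%g = N ->
  (N <| G)%g ->
  (forall i g, g \in G -> exists j, (Si i :^ g)%g = Si j) ->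
  in_principal_block M ('chi_beta) ->
  ~~ (Si ord0 \subset cfker ('chi_beta %% 'C_G(Si ord0))%CF) ->
  in_principal_block M ('Ind[G] ('chi_beta %% 'C_G(Si ord0))%CF).
Proof.
move=> pr_p hM hdp nsNG hperm blk notker.
rewrite big_ord_recl in hdp.
have [[K R defK defR] _ _ _] := dprodP hdp.
rewrite defR in hdp.
have hperm' : forall g, g \in G -> (Si ord0 :^ g)%g = Si ord0 \/ (Si ord0 :^ g \subset R)%g.
  move=> g Gg; have [j ej] := hperm ord0 g Gg.
  case: (unliftP ord0 j) => [k ->|->] in ej *; [right | left]; rewrite ej //.
  rewrite -(bigdprodWY defR); apply: (subset_trans (bigcup_sup k (P:=xpredT) (F := fun i => gval (Si (lift ord0 i))) isT)).
  exact: sub_gen.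
split; first by eapply core_irr; eassumption.
by move=> x Gx; eapply core_block; eassumption.
Qed.
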